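(* For every round $r$, there is at least one block $b$ of round $r$ such that every valid block of round $r+2$ has a path to $b$.
   Context: There are $n=3f+1$ validators, at most $f$ Byzantine; every honest validator creates exactly one block in every round. Every valid block of round $r$ has as parents (hash references) at least $2f+1$ blocks of round $r-1$ from distinct validators. There is a path from $b$ to $b'$ if $b'$ is reached from $b$ by repeatedly following parent references. *)

(* Defs.v *)
From mathcomp Require Import all_boot.
From Stdlib Require Import Relations.

Set Implicit Arguments.
Unset Strict Implicit.
Unset Printing Implicit Defensive.

(* A DAG of blocks: each block has an author (validator), a round, and
   parent (hash) references.  [parent b p] means b references p. *)

Definition valid_block (V : finType) (Block : Type) (f : nat)
    (author : Block -> V) (round : Block -> nat)
    (parent : Block -> Block -> Prop) (b : Block) : Prop :=
  round b = 0 \/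
  exists S : {set V}, 2 * f + 1 <= #|S| /\
    forall v, v \in S ->
      exists p, parent b p /\ author p = v /\ round p = (round b).-1.

Definition has_path (Block : Type) (parent : Block -> Block -> Prop)
    (b b' : Block) : Prop :=
  clos_refl_trans Block parent b b'.

(* Main.v *)
Require Import Defs.
From mathcomp Require Import all_boot.
From Stdlib Require Import Relations ClassicalEpsilon.
From mathcomp Require Import zify.

Lemma card_sum_helper (T : finType) (A : {set T}) (P : pred T) :
  \sum_(u in A) (P u : nat) = #|[set u in A | P u]|.
Proof.
rewrite -sum1_card [RHS]big_mkcond [LHS]big_mkcond /=.
apply: eq_bigr => u _; rewrite inE; by case: (u \in A); case: (P u).
Qed.

Definition decP (P : Prop) : bool :=
  if excluded_middle_informative P then true else false.

Lemma decPP (P : Prop) : reflect P (decP P).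
Proof. rewrite /decP; case: excluded_middle_informative => h; by constructor. Qed.

Theorem lemma10 (f : nat) (V : finType) (Block : Type)
    (author : Block -> V) (round : Block -> nat)
    (parent : Block -> Block -> Prop) (byz : {set V}) :
  #|V| = 3 * f + 1 ->
  #|byz| <= f ->
  (* every honest validator creates exactly one block in every round,
     and that block is valid *)
  (forall v, v \notin byz -> forall r, exists b,
      [/\ author b = v, round b = r,
          valid_block f author round parent b &
          forall b', author b' = v -> round b' = r -> b' = b]) ->
  forall r, exists b, round b = r /\
    forall b', round b' = r.+2 -> valid_block f author round parent b' ->
      has_path parent b' b.
Proof.
move=> hV hbyz hon r.
pose H := ~: byz.
pose Ref v u := exists pv pu, [/\ author pv = v, round pv = r.+1,
   author pu = u, round pu = r & parent pv pu].
pose refb v u := decP (Ref v u).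
have hH : #|H| = 3 * f + 1 - #|byz| by rewrite cardsCs setCK; rewrite -hV; lia.
have many : forall v, v \in H -> 2 * f + 1 - #|byz| <= #|[set u in H | refb v u]|.
  move=> v; rewrite inE => hv.
  have [bv [av rv vv _]] := hon v hv r.+1.
  case: vv => [|[S [hS hSp]]]; first by rewrite rv.
  have sub : S :\: byz \subset [set u in H | refb v u].
    apply/subsetP => u; rewrite !inE => /andP [ub uS].
    rewrite ub /=. apply/decPP.
    have [p [pp [ap rp]]] := hSp u uS.
    exists bv, p; split => //; by rewrite rp rv.
  apply: leq_trans (subset_leq_card sub).
  rewrite cardsD.
  have : #|S :&: byz| <= #|byz| by apply: subset_leq_card; apply: subsetIr.
  lia.
have [u [uH hu]] : exists u, u \in H /\ f + 1 <= #|[set v in H | refb v u]|.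
  case: (boolP [exists u, (u \in H) && (f + 1 <= #|[set v in H | refb v u]|)]).
    by case/existsP => u /andP [a b]; exists u.
  move=> Hn; exfalso; move/existsP: Hn => Hn.
  have le1 : forall u, u \in H -> #|[set v in H | refb v u]| <= f.
    move=> u uH; case: (leqP #|[set v in H | refb v u]| f) => // lt.
    exfalso; apply: Hn; exists u; rewrite uH /=. by rewrite addn1.
  have s1 : \sum_(v in H) \sum_(u in H) (refb v u : nat) >= #|H| * (2 * f + 1 - #|byz|).
    rewrite -sum_nat_const; apply: leq_sum => v vH.
    rewrite card_sum_helper; exact: many.
  have s2 : \sum_(v in H) \sum_(u in H) (refb v u : nat) <= #|H| * f.
    rewrite exchange_big /= -sum_nat_const; apply: leq_sum => u uH.
    rewrite (@card_sum_helper _ H (fun v => refb v u)); exact: le1.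
  have := leq_trans s1 s2.
  have h1 : 0 < #|H| by lia.
  rewrite leq_pmul2l //; lia.
have uh : u \notin byz by move: uH; rewrite inE.
have [bu [au ru _ uu]] := hon u uh r.
exists bu; split => // b' rb' [|[S [hS hSp]]]; first by rewrite rb'.
have : 0 < #|S :&: [set v in H | refb v u]|.
  have := cardsU S [set v in H | refb v u].
  have := max_card (S :|: [set v in H | refb v u]).
  lia.
case/card_gt0P => v; rewrite !inE => /andP [vS /andP [vH /decPP]].
move=> [pv [pu [apv rpv apu rpu ppv]]].
have [p [pp [ap rp]]] := hSp v vS.
have [bv [av rv _ uv]] := hon v vH r.+1.
have e1 : p = pv.
  rewrite (uv p ap) ?rp ?rb' // (uv pv apv rpv) //.
have e2 : pu = bu by apply: uu.
apply: rt_trans (rt_step _ _ _ _ pp) _.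
rewrite e1 -e2; exact: rt_step.
Qed.
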